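(* $\lim_{k\to\infty,\ k\text{ odd}}p_k^\star=\frac12$.
   Context: For odd $k\ge3$, $p,x\in[0,1]$: $F_{p,k}(x)=\Pr[\mathrm{Bin}(k,(1-p)x)\ge(k+1)/2]$. $p_k^\star\in[1/9,1/2)$ is the (unique) value such that for $0\le p<p_k^\star$ the equation $F_{p,k}(x)=x$ on $[0,1]$ has exactly three solutions, for $p=p_k^\star$ exactly two, and for $p>p_k^\star$ its only solution is $0$. *)

(* Defs.v *)
From Stdlib Require Import Reals List Arith.
Open Scope R_scope.

(* F_{p,k}(x) = Pr[Bin(k,(1-p)x) >= (k+1)/2]
   = sum_{j=(k+1)/2}^{k} C(k,j) q^j (1-q)^(k-j),  q = (1-p) x. *)
Definition F (p : R) (k : nat) (x : R) : R :=
  let q := (1 - p) * x in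
  sum_f_R0 (fun j => if Nat.leb ((k + 1) / 2) j
                     then C k j * q ^ j * (1 - q) ^ (k - j) else 0) k.

Definition exactly_n_solutions (p : R) (k n : nat) : Prop :=
  exists l : list R, NoDup l /\ length l = n /\
    forall x, In x l <-> (0 <= x <= 1 /\ F p k x = x).

Definition is_pstar (k : nat) (ps : R) : Prop :=
  0 <= ps <= 1 /\
  (forall p, 0 <= p < ps -> exactly_n_solutions p k 3) /\
  exactly_n_solutions ps k 2 /\
  (forall p, ps < p <= 1 -> forall x, 0 <= x <= 1 -> F p k x = x -> x = 0).

(* Main.v *)
Require Import Defs.
From Stdlib Require Import Reals Arith ZArith List Lra Lia Psatz.
Open Scope R_scope.

Fixpoint Cn (n j : nat) : R :=
  match n, j with
  | O, O => 1
  | O, S _ => 0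
  | S _, O => 1
  | S n', S j' => Cn n' j' + Cn n' (S j')
  end.

Lemma Cn_big n : forall j, (n < j)%nat -> Cn n j = 0.
Proof.
  induction n; intros j H; destruct j; simpl; try lia; auto.
  rewrite !IHn; lia || lra.
Qed.

Lemma Cn_nn n : Cn n n = 1.
Proof. induction n; simpl; auto. rewrite IHn, Cn_big; lia || lra. Qed.

Lemma Cn_ge0 n : forall j, 0 <= Cn n j.
Proof. induction n; intros j; destruct j; simpl; try lra. pose proof (IHn j); pose proof (IHn (S j)). lra. Qed.

Lemma C_n_0' n : C n 0 = 1.
Proof. unfold C. rewrite Nat.sub_0_r. simpl. field. apply INR_fact_neq_0. Qed.
Lemma C_n_n' n : C n n = 1.
Proof. unfold C. rewrite Nat.sub_diag. simpl. field. apply INR_fact_neq_0. Qed.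

Lemma C_Cn n : forall j, (j <= n)%nat -> C n j = Cn n j.
Proof.
  induction n; intros j H.
  - destruct j; [|lia]. apply C_n_0'.
  - destruct j. + apply C_n_0'.
    + simpl. destruct (Nat.eq_dec j n).
      * subst. rewrite C_n_n', Cn_nn, Cn_big; lia || lra.
      * rewrite <- pascal by lia. rewrite !IHn by lia. reflexivity.
Qed.

Definition G (k : nat) (q : R) (f : nat -> R) : R :=
  sum_f_R0 (fun j => Cn k j * q ^ j * (1 - q) ^ (k - j) * f j) k.

Lemma G_rec k q f : G (S k) q f = q * G k q (fun j => f (S j)) + (1 - q) * G k q f.
Proof.
  unfold G.
  rewrite decomp_sum by lia. simpl Nat.pred.
  rewrite (sum_eq _ (fun j => Cn k j * q ^ j * (1-q)^(k-j) * f (S j) * q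
                     + Cn k (S j) * q ^ (S j) * (1-q)^(k-j) * f (S j))).
  2:{ intros i Hi. simpl Cn. replace (S k - S i)%nat with (k - i)%nat by lia. simpl. ring. }
  rewrite plus_sum, <- scal_sum.
  destruct k as [|k].
  - simpl. ring.
  - set (B := sum_f_R0 (fun j => Cn (S k) (S j) * q ^ S j * (1 - q) ^ (S k - j) * f (S j)) (S k)).
    assert (HB : B = sum_f_R0 (fun j => Cn (S k) (S j) * q ^ S j * (1 - q) ^ (S k - S j) * f (S j)) k * (1-q)).
    { unfold B. rewrite tech5. rewrite (Cn_big (S k) (S (S k))) by lia.
      rewrite (Rmult_comm _ (1-q)), scal_sum.
      rewrite Rmult_0_l, Rmult_0_l, Rmult_0_l, Rplus_0_r. apply sum_eq. intros i Hi.
      replace (S k - i)%nat with (S (S k - S i))%nat by lia. simpl. ring. }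
    rewrite HB. clear HB B.
    rewrite (decomp_sum (fun j => Cn (S k) j * q ^ j * (1 - q) ^ (S k - j) * f j) (S k)) by lia.
    simpl Nat.pred.
    replace (S (S k) - 0)%nat with (S (S k)) by lia.
    replace (S k - 0)%nat with (S k) by lia.
    simpl Cn. simpl pow. ring.
Qed.

Lemma G_ext k q f g : (forall j, f j = g j) -> G k q f = G k q g.
Proof. intros H; unfold G; apply sum_eq; intros; rewrite H; auto. Qed.

Lemma G_quad k : forall q a b c,
  G k q (fun j => a * INR j ^ 2 + b * INR j + c) =
  a * (INR k * (INR k - 1) * q ^ 2 + INR k * q) + b * INR k * q + c.
Proof.
  induction k; intros q a b c.
  - unfold G; simpl. ring.
  - rewrite G_rec.
    rewrite (G_ext k q _ (fun j => a * INR j ^ 2 + (2*a+b) * INR j + (a+b+c))).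
    2:{ intros j. rewrite S_INR. ring. }
    rewrite !IHk. rewrite S_INR. ring.
Qed.

Lemma G_le k q f g : 0 <= q <= 1 -> (forall j, (j <= k)%nat -> f j <= g j) -> G k q f <= G k q g.
Proof.
  intros Hq H; unfold G; apply sum_Rle; intros j Hj.
  apply Rmult_le_compat_l; [|auto].
  pose proof (Cn_ge0 k j). pose proof (pow_le q j). pose proof (pow_le (1-q) (k-j)).
  assert (0 <= 1 - q) by lra.
  apply Rmult_le_pos; [apply Rmult_le_pos|]; auto; apply H1; lra.
Qed.

Definition ind (m : nat) (j : nat) : R := if Nat.leb m j then 1 else 0.

Lemma F_G p k x : F p k x = G k ((1-p)*x) (ind ((k+1)/2)).
Proof.
  unfold F, G, ind. cbv zeta. apply sum_eq. intros j Hj.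
  rewrite C_Cn by lia. destruct (Nat.leb _ _); ring.
Qed.

Lemma cheb_up k q m : 0 <= q <= 1 -> INR k * q < INR m ->
  G k q (ind m) <= INR k * q * (1 - q) / (INR m - INR k * q) ^ 2.
Proof.
  intros Hq Hm. set (t := INR m - INR k * q).
  assert (Ht : 0 < t) by (unfold t; lra).
  eapply Rle_trans.
  apply (G_le k q _ (fun j => (/ t^2) * INR j ^ 2 + (- 2 * INR k * q / t^2) * INR j + (INR k * q)^2 / t^2)); auto.
  - intros j _. unfold ind. destruct (Nat.leb m j) eqn:E.
    + apply Nat.leb_le in E. apply le_INR in E.
      apply (Rmult_le_reg_l (t^2)). nra.
      replace (t ^ 2 * (/ t ^ 2 * INR j ^ 2 + - 2 * INR k * q / t ^ 2 * INR j + (INR k * q) ^ 2 / t ^ 2))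
        with ((INR j - INR k * q)^2) by (field; lra).
      unfold t in *. nra.
    + replace (/ t ^ 2 * INR j ^ 2 + - 2 * INR k * q / t ^ 2 * INR j + (INR k * q) ^ 2 / t ^ 2)
        with ((INR j - INR k * q)^2 / t^2) by (field; lra).
      unfold Rdiv; apply Rmult_le_pos; [apply pow2_ge_0 | apply Rlt_le, Rinv_0_lt_compat, pow_lt; exact Ht].
  - rewrite G_quad. right. field. lra.
Qed.

Lemma cheb_low k q n : 0 <= q <= 1 -> INR n < INR k * q ->
  1 - INR k * q * (1 - q) / (INR k * q - INR n) ^ 2 <= G k q (ind (S n)).
Proof.
  intros Hq Hm. set (t := INR k * q - INR n).
  assert (Ht : 0 < t) by (unfold t; lra).
  assert (H1 : G k q (fun j => 0 * INR j ^ 2 + 0 * INR j + 1) = 1) by (rewrite G_quad; ring).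
  assert (H2 : G k q (fun j => 1 - ind (S n) j) <= INR k * q * (1 - q) / t ^ 2).
  { eapply Rle_trans.
    apply (G_le k q _ (fun j => (/ t^2) * INR j ^ 2 + (- 2 * INR k * q / t^2) * INR j + (INR k * q)^2 / t^2)); auto.
    - intros j _.
      replace (/ t ^ 2 * INR j ^ 2 + - 2 * INR k * q / t ^ 2 * INR j + (INR k * q) ^ 2 / t ^ 2)
        with ((INR j - INR k * q)^2 / t^2) by (field; lra).
      unfold ind. destruct (Nat.leb (S n) j) eqn:E.
      + replace (1 - 1) with 0 by ring. unfold Rdiv; apply Rmult_le_pos; [apply pow2_ge_0 | apply Rlt_le, Rinv_0_lt_compat, pow_lt; exact Ht].
      + apply Nat.leb_gt in E. assert (INR j <= INR n) by (apply le_INR; lia).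
        apply (Rmult_le_reg_l (t^2)). nra.
        replace (t ^ 2 * ((INR j - INR k * q) ^ 2 / t ^ 2)) with ((INR j - INR k * q)^2) by (field; lra).
        unfold t in *. nra.
    - rewrite G_quad. right. field. lra. }
  assert (H3 : G k q (fun j => 1 - ind (S n) j) = 1 - G k q (ind (S n))).
  { unfold G. replace (sum_f_R0 (fun j => Cn k j * q ^ j * (1 - q) ^ (k - j) * (1 - ind (S n) j)) k)
      with (sum_f_R0 (fun j => Cn k j * q ^ j * (1 - q) ^ (k - j) * (0 * INR j ^ 2 + 0 * INR j + 1)
               + (Cn k j * q ^ j * (1 - q) ^ (k - j) * ind (S n) j) * (-1)) k).
    2:{ apply sum_eq. intros; ring. }
    rewrite plus_sum, <- scal_sum. fold (G k q (fun j => 0 * INR j ^ 2 + 0 * INR j + 1)).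
    rewrite H1. ring. }
  fold t. lra.
Qed.

Lemma cont_sum (g : nat -> R -> R) n : (forall j, continuity (g j)) ->
  continuity (fun x => sum_f_R0 (fun j => g j x) n).
Proof.
  intros H. induction n; simpl.
  - apply H.
  - apply continuity_plus; auto.
Qed.

Lemma cont_F p k : continuity (fun x => F p k x - x).
Proof.
  apply continuity_minus; [|apply derivable_continuous; reg].
  unfold F; cbv zeta.
  apply (cont_sum (fun j x => if Nat.leb ((k + 1) / 2) j then C k j * ((1 - p) * x) ^ j * (1 - (1 - p) * x) ^ (k - j) else 0)).
  intros j. destruct (Nat.leb _ _).
  - apply derivable_continuous; reg.
  - apply continuity_const. intros x y; auto.
Qed.

Lemma nat_unb M : exists N : nat, M < INR N.
Proof.
  destruct (archimed M) as [H _].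
  destruct (ZArith_dec.Z_le_gt_dec 0 (up M)) as [Hz|Hz].
  - exists (Z.to_nat (up M)). rewrite INR_IZR_INZ, Z2Nat.id by lia. lra.
  - exists 0%nat. simpl. assert (Hz2 : (up M < 0)%Z) by lia. apply IZR_lt in Hz2. lra.
Qed.

Lemma three_nonzero p k : exactly_n_solutions p k 3 ->
  exists x, 0 < x <= 1 /\ F p k x = x.
Proof.
  intros [l [Hnd [Hlen Hin]]].
  destruct l as [|a [|b [|c l']]]; simpl in Hlen; try lia.
  assert (Hab : a <> b).
  { intros ->. inversion Hnd as [|? ? Hn _]; subst. apply Hn; simpl; auto. }
  destruct (Req_dec a 0) as [Ha|Ha].
  - destruct (proj1 (Hin b) ltac:(simpl; auto)) as [[H1 H2] H3].
    exists b. split; [|auto]. split; [|auto]. destruct H1; auto. subst. congruence.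
  - destruct (proj1 (Hin a) ltac:(simpl; auto)) as [[H1 H2] H3].
    exists a. split; [|auto]. split; [|auto]. destruct H1; auto. congruence.
Qed.

Lemma odd_form k : Nat.odd k = true -> exists n, k = (2 * n + 1)%nat /\ ((k + 1) / 2 = S n)%nat.
Proof.
  intros H. apply Nat.odd_spec in H. destruct H as [n ->]. exists n. split; auto.
  replace (2 * n + 1 + 1)%nat with (S n * 2)%nat by lia. apply Nat.div_mul. lia.
Qed.

Theorem lemmaA9 (pstar : nat -> R)
  (Hps : forall k : nat, (3 <= k)%nat -> Nat.odd k = true -> is_pstar k (pstar k)) :
  forall eps : R, 0 < eps ->
    exists N : nat, forall k : nat, (N <= k)%nat -> (3 <= k)%nat -> Nat.odd k = true ->
      Rabs (pstar k - 1 / 2) < eps.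
Proof.
  intros eps Heps.
  set (e := Rmin eps (1/2)).
  assert (He0 : 0 < e) by (unfold e; apply Rmin_glb_lt; lra).
  assert (He1 : e <= 1/2) by (unfold e; apply Rmin_r).
  assert (He2 : e <= eps) by (unfold e; apply Rmin_l).
  destruct (nat_unb (16 / e ^ 3)) as [N HN].
  exists N. intros k HkN Hk3 Hodd.
  assert (HkR : 16 / e ^ 3 < INR k) by (apply le_INR in HkN; lra).
  assert (He3 : 0 < e ^ 3) by (apply pow_lt; lra).
  assert (Hke3 : 16 < INR k * e ^ 3).
  { apply (Rmult_lt_compat_r (e^3)) in HkR; auto.
    replace (16 / e ^ 3 * e ^ 3) with 16 in HkR by (field; lra). lra. }
  assert (Hke2 : 2 < INR k * e ^ 2).
  { assert (INR k * e ^ 3 <= INR k * e ^ 2 * (1/2)).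
    { replace (e^3) with (e^2 * e) by ring. rewrite Rmult_assoc.
      apply Rmult_le_compat_l. apply pos_INR. apply Rmult_le_compat_l; [nra|lra]. }
    lra. }
  assert (Hk0 : 0 < INR k) by (apply lt_0_INR; lia).
  destruct (odd_form k Hodd) as [n [Hkn Hm]].
  assert (HkRn : INR k = 2 * INR n + 1) by (rewrite Hkn, plus_INR, mult_INR; simpl; ring).
  destruct (Hps k Hk3 Hodd) as [Hb [H3 [H2 H0]]].
  assert (Hup : pstar k < 1/2 + e).
  { destruct (Rlt_or_le (pstar k) (1/2 + e)) as [|Hc]; auto. exfalso.
    set (p := 1/2 + e/2).
    destruct (three_nonzero p k (H3 p ltac:(unfold p; lra))) as [x [Hx Hfx]].
    rewrite F_G, Hm in Hfx.
    set (q := (1 - p) * x) in Hfx.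
    assert (Hq0 : 0 <= q) by (unfold q, p; nra).
    assert (Hq1 : q <= 1/2 - e/2) by (unfold q, p; nra).
    assert (Hqx : q <= x / 2) by (unfold q, p; nra).
    assert (Hlt : INR k * q < INR (S n)) by (rewrite S_INR; nra).
    pose proof (cheb_up k q (S n) ltac:(lra) Hlt) as Hc1.
    rewrite Hfx in Hc1. rewrite S_INR in Hc1.
    set (t := INR n + 1 - INR k * q) in Hc1.
    assert (Ht : INR k * e / 2 <= t) by (unfold t; nra).
    assert (Ht0 : 0 < t) by nra.
    assert (Hnum : INR k * q * (1 - q) <= INR k * x / 2) by nra.
    assert (Hc2 : x * t ^ 2 <= INR k * x / 2).
    { apply (Rmult_le_reg_r (/ t^2)). apply Rinv_0_lt_compat; nra.
      replace (x * t ^ 2 * / t ^ 2) with x by (field; lra).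
      eapply Rle_trans; [exact Hc1|]. unfold Rdiv. 
      apply Rmult_le_compat_r; [left; apply Rinv_0_lt_compat; nra | lra]. }
    assert (Hc3 : (INR k * e / 2) ^ 2 <= t ^ 2) by (apply pow_incr; split; nra).
    assert (x * (INR k * e / 2) ^ 2 <= INR k * x / 2) by nra.
    assert (INR k * e ^ 2 <= 2) .
    { assert (x * INR k * (INR k * e^2 / 4 - 1/2) <= 0) by nra.
      assert (0 < x * INR k) by nra. nra. }
    lra. }
  assert (Hlow : 1/2 - e < pstar k).
  { destruct (Rlt_or_le (1/2 - e) (pstar k)) as [|Hc]; auto. exfalso.
    set (p := 1/2 - e/2).
    set (x0 := 1 - e/4).
    set (q := (1 - p) * x0).
    assert (Hq0 : 1/2 + e/4 <= q) by (unfold q, p, x0; nra).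
    assert (Hq1 : q <= 1) by (unfold q, p, x0; nra).
    assert (Hlt : INR n < INR k * q) by nra.
    pose proof (cheb_low k q n ltac:(lra) Hlt) as Hc1.
    set (t := INR k * q - INR n) in Hc1.
    assert (Ht : INR k * e / 4 <= t) by (unfold t; nra).
    assert (Ht0 : 0 < t) by nra.
    assert (Hqq : q * (1 - q) <= 1/4) by nra.
    assert (Hnum : INR k * q * (1 - q) <= INR k / 4) by (rewrite Rmult_assoc; apply (Rmult_le_compat_l (INR k)) in Hqq; lra).
    assert (Hb2 : INR k * q * (1 - q) / t ^ 2 <= e / 4).
    { apply (Rmult_le_reg_r (t^2)). nra.
      replace (INR k * q * (1 - q) / t ^ 2 * t ^ 2) with (INR k * q * (1 - q)) by (field; lra).
      assert (Hc3 : (INR k * e / 4) ^ 2 <= t ^ 2) by (apply pow_incr; split; nra).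
      assert (INR k / 4 <= e / 4 * (INR k * e / 4) ^ 2).
      { assert (INR k * (INR k * e^3 / 64 - 1/4) >= 0) by nra. nra. }
      nra. }
    assert (Hg0 : 0 <= F p k x0 - x0).
    { rewrite F_G, Hm. fold q. unfold x0. lra. }
    assert (Hg1 : F p k 1 - 1 <= 0).
    { rewrite F_G.
      assert (G k ((1 - p) * 1) (ind ((k + 1) / 2)) <= G k ((1-p)*1) (fun j => 0 * INR j ^ 2 + 0 * INR j + 1)).
      { apply G_le. unfold p; lra. intros j _. unfold ind. destruct (Nat.leb _ _); lra. }
      rewrite G_quad in H. lra. }
    destruct (IVT_cor (fun x => F p k x - x) x0 1 (cont_F p k) ltac:(unfold x0; lra)
               ltac:(nra)) as [z [Hz Hfz]].
    assert (z = 0).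
    { apply (H0 p); [unfold p; lra | unfold x0 in Hz; lra | lra]. }
    unfold x0 in Hz. lra. }
  unfold Rabs. destruct (Rcase_abs _); lra.
Qed.
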